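(* For $0\le S\le S'$, one has $B^*(S')\le B^*(S)$; that is, increasing the solar panel size does not increase the minimum required battery capacity.
   Context: Fix a macro base station and a horizon of $N$ time slots. Let $e(k)\ge 0$ be the solar energy generated per unit panel area in slot $k$, $p(k)\ge 0$ the base station's energy consumption in slot $k$, and $\alpha(k)\in[0,1]$ the required green-energy fraction in slot $k$, $k=1,\dots,N$. For a panel size $S\ge0$ and battery capacity $B\ge 0$, the battery energy evolves as $b(0)=0$ and $$b(k)=\min\{\max\{b(k-1)+e(k)S-p(k),\,0\},\,B\},\quad k=1,\dots,N.$$ The pair $(S,B)$ is feasible if $b(k-1)+e(k)S\ge \alpha(k)p(k)$ for all $k=1,\dots,N$. The required battery capacity for panel size $S$ is $B^*(S)=\inf\{B\ge 0:(S,B)\text{ feasible}\}$, with $B^*(S)=+\infty$ if no such $B$ exists. *)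

(* Defs.v *)
From Stdlib Require Import Reals Lra Classical ClassicalEpsilon.
Open Scope R_scope.

(* Battery recursion: b(0)=0, b(k)=min{max{b(k-1)+e(k)S-p(k),0},B}.
   Sequences e p alpha are indexed by nat; slots are k = 1..N. *)
Fixpoint batt (e p : nat -> R) (S B : R) (k : nat) : R :=
  match k with
  | O => 0
  | Datatypes.S k' => Rmin (Rmax (batt e p S B k' + e k * S - p k) 0) B
  end.

Definition feasible (e p alpha : nat -> R) (N : nat) (S B : R) : Prop :=
  forall k, (1 <= k <= N)%nat ->
    batt e p S B (k - 1) + e k * S >= alpha k * p k.

Inductive ereal := Fin (x : R) | PInf.

Definition ele (x y : ereal) : Prop :=
  match x, y with
  | _, PInf => True
  | PInf, Fin _ => False
  | Fin a, Fin b => a <= b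
  end.

Definition feasB (e p alpha : nat -> R) (N : nat) (S : R) (B : R) : Prop :=
  0 <= B /\ feasible e p alpha N S B.

Definition is_inf (A : R -> Prop) (m : R) : Prop :=
  (forall x, A x -> m <= x) /\ (forall m', (forall x, A x -> m' <= x) -> m' <= m).

(* B*(S) = inf {B >= 0 : (S,B) feasible}, = +infinity if the set is empty.
   Defined via classical choice (the infimum exists since the set is bounded below by 0). *)
Definition Bstar (e p alpha : nat -> R) (N : nat) (S : R) : ereal :=
  match excluded_middle_informative (exists B, feasB e p alpha N S B) with
  | left _ => Fin (epsilon (inhabits 0) (is_inf (feasB e p alpha N S)))
  | right _ => PInf
  end.

(* Main.v *)
Require Import Defs.
From Stdlib Require Import Reals.
From Stdlib Require Import Lra Lia Classical ClassicalEpsilon.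
Open Scope R_scope.

Lemma batt_mono (N : nat) (e p : nat -> R)
  (he : forall k, (1 <= k <= N)%nat -> 0 <= e k) (S S' B : R) (hSS' : S <= S') :
  forall k, (k <= N)%nat -> batt e p S B k <= batt e p S' B k.
Proof.
  induction k as [|k IH]; intros Hk; simpl. lra.
  assert (H1 : batt e p S B k <= batt e p S' B k) by (apply IH; lia).
  assert (H2 : 0 <= e (Datatypes.S k)) by (apply he; lia).
  assert (H3 : e (Datatypes.S k) * S <= e (Datatypes.S k) * S') by (apply Rmult_le_compat_l; [exact H2 | exact hSS']).
  apply Rle_min_compat_r. apply Rle_max_compat_r. lra.
Qed.

Lemma feas_mono (N : nat) (e p alpha : nat -> R)
  (he : forall k, (1 <= k <= N)%nat -> 0 <= e k) (S S' B : R) (hS : 0 <= S) (hSS' : S <= S') :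
  feasible e p alpha N S B -> feasible e p alpha N S' B.
Proof.
  intros F k Hk. specialize (F k Hk).
  assert (H1 := batt_mono N e p he S S' B hSS' (k-1) ltac:(lia)).
  assert (H2 : 0 <= e k) by (apply he; lia).
  assert (H3 : e k * S <= e k * S') by (apply Rmult_le_compat_l; [exact H2 | exact hSS']).
  lra.
Qed.

Lemma inf_exists (A : R -> Prop) : (exists x, A x) -> (forall x, A x -> 0 <= x) ->
  exists m, is_inf A m.
Proof.
  intros [x0 Hx0] Hlb.
  destruct (completeness (fun y => A (- y))) as [l [Hl1 Hl2]].
  - exists 0. intros y Hy. specialize (Hlb _ Hy). lra.
  - exists (- x0). rewrite Ropp_involutive. auto.
  - exists (- l). split.
    + intros x Hx. assert (x <= - - x) by lra.
      assert (- x <= l) by (apply Hl1; rewrite Ropp_involutive; auto). lra.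
    + intros m' Hm'. assert (l <= - m'). { apply Hl2. intros y Hy. specialize (Hm' _ Hy). lra. }
      lra.
Qed.

Theorem lemma2 (N : nat) (e p alpha : nat -> R)
  (he : forall k, (1 <= k <= N)%nat -> 0 <= e k)
  (hp : forall k, (1 <= k <= N)%nat -> 0 <= p k)
  (halpha : forall k, (1 <= k <= N)%nat -> 0 <= alpha k <= 1)
  (S S' : R) (hS : 0 <= S) (hSS' : S <= S') :
  ele (Bstar e p alpha N S') (Bstar e p alpha N S).
Proof.
  unfold Bstar.
  destruct (excluded_middle_informative (exists B, feasB e p alpha N S B)) as [HS|HS].
  2:{ destruct (excluded_middle_informative _); simpl; auto. }
  assert (HS' : exists B, feasB e p alpha N S' B).
  { destruct HS as [B [HB FB]]. exists B. split; [exact HB|]. apply (feas_mono N e p alpha he S S' _ hS hSS'); assumption. }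
  destruct (excluded_middle_informative (exists B, feasB e p alpha N S' B)) as [_|C];
    [|contradiction]. simpl.
  assert (E1 := epsilon_spec (inhabits 0) (is_inf (feasB e p alpha N S))
    (inf_exists _ HS (fun x Hx => proj1 Hx))).
  assert (E2 := epsilon_spec (inhabits 0) (is_inf (feasB e p alpha N S'))
    (inf_exists _ HS' (fun x Hx => proj1 Hx))).
  destruct E1 as [_ E1]. destruct E2 as [E2 _].
  apply E1. intros x [Hx Fx]. apply E2. split; auto. apply (feas_mono N e p alpha he S S' _ hS hSS'); assumption.
Qed.
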